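(* Let $k$ be an algebraically closed field of characteristic zero, $n\ge1$, $q\in k$ a primitive $2n$-th root of unity, $a\in k\setminus\{0\}$. Let $\mathfrak wH_{4n}$ be the weak Hopf algebra generated by $Z,X$ with $Z^{2n+1}=Z$, $ZX=qXZ$, $X^2=0$, $\Delta(Z)=Z\otimes Z+a(1-q^{-2})Z^{n+1}X\otimes ZX$, $\Delta(X)=X\otimes 1+Z^n\otimes X$, $\epsilon(Z)=1$, $\epsilon(X)=0$, $T(Z)=Z^{2n-1}$, $T(X)=-Z^nX$. Let $H_{4n}$ be the Hopf algebra generated by $z,x$ with $z^{2n}=1$, $zx=qxz$, $x^2=0$, $\Delta(z)=z\otimes z+a(1-q^{-2})z^{n+1}x\otimes zx$, $\Delta(x)=x\otimes 1+z^n\otimes x$, $\epsilon(z)=1$, $\epsilon(x)=0$, $S(z)=z^{-1}$, $S(x)=-z^nx$. Let $J=Z^{2n}$, $\mathfrak w_1=\mathfrak wH_{4n}J$ and $\mathfrak w_2=\mathfrak wH_{4n}(1-J)$. Then $\mathfrak wH_{4n}=\mathfrak w_1\oplus\mathfrak w_2$ as a direct sum of two-sided ideals; moreover $\mathfrak w_1$ (with unit $J$, and with the comultiplication and counit restricted from $\mathfrak wH_{4n}$ and antipode $Z\mapsto Z^{2n-1}$, $XJ\mapsto -Z^nXJ$) is isomorphic to $H_{4n}$ as Hopf algebras, and $\mathfrak w_2\cong k[y]/(y^2)$ as algebras. *)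

(* Defs.v *)
From HB Require Import structures.
From mathcomp Require Import all_boot all_order all_algebra.
Set Implicit Arguments. Unset Strict Implicit. Unset Printing Implicit Defensive.
Import Order.TTheory GRing.Theory Num.Theory.
Local Open Scope ring_scope.

Notation vect k I := {ffun I -> k^o}.
Section StructConst.
Variable k : fieldType.



Definition linext (I J : finType) (F : I -> vect k J) (f : vect k I) : vect k J :=
  \sum_(i : I) f i *: F i.

Definition bilin (I : finType) (m : I -> I -> vect k I) (f g : vect k I) : vect k I :=
  \sum_(i : I) \sum_(j : I) (f i * g j) *: m i j.

(* elementary tensor f (x) g in V (x) W = functions on I * J *)
Definition tens (I J : finType) (f : vect k I) (g : vect k J) : vect k (I * J) :=
  [ffun p => f p.1 * g p.2].

Definition tmap (I J : finType) (phi : vect k I -> vect k J) (t : vect k (I * I)) :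
  vect k (J * J) :=
  \sum_(p : I * I) t p *: tens (phi [ffun i => (i == p.1)%:R])
                                (phi [ffun i => (i == p.2)%:R]).

Variables (I : finType) (m : I -> I -> vect k I) (one : vect k I).

Definition amul := bilin m.
Definition apow (f : vect k I) (e : nat) : vect k I := iter e (amul f) one.

Definition tmul := bilin (fun i j : I * I => tens (m i.1 j.1) (m i.2 j.2)).
Definition tone := tens one one.
Definition tpow (t : vect k (I * I)) (e : nat) : vect k (I * I) := iter e (tmul t) tone.
End StructConst.

(* ---------- the weak Hopf algebra wH_{4n} ----------
   basis: Z^i X^b, 0 <= i <= 2n, b in {0,1}  (Z^0 = 1) *)
Section wH.
Variables (k : fieldType) (n : nat) (q a : k).

Definition WI := ('I_(2 * n).+1 * bool)%type.

(* reduction of exponents of Z using Z^(2n+1) = Z *)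
Definition redW (m : nat) : nat := if m == 0%N then 0%N else ((m.-1 %% (2 * n)).+1)%N.

Definition monW (m : nat) (b : bool) : vect k WI :=
  [ffun p : WI => (((p.1 : nat) == redW m) && (p.2 == b))%:R].

(* (Z^i X^b)(Z^j X^c) = q^{-bj} Z^{i+j} X^{b+c}  (using XZ = q^{-1} ZX, X^2 = 0) *)
Definition multW (i j : WI) : vect k WI :=
  if i.2 && j.2 then 0 else (q ^- (i.2 * j.1)%N) *: monW (i.1 + j.1) (i.2 || j.2).

Definition oneW := monW 0 false.
Definition mulW := amul multW.
Definition powW := apow multW oneW.
Definition ZW := monW 1 false.
Definition XW := monW 0 true.
Definition tmulW := tmul multW.
Definition tpowW := tpow multW oneW.

Definition DZW : vect k (WI * WI) :=
  tens ZW ZW + (a * (1 - q ^- 2)) *: tens (mulW (powW ZW n.+1) XW) (mulW ZW XW).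
Definition DXW : vect k (WI * WI) := tens XW oneW + tens (powW ZW n) XW.
(* Delta is the algebra map determined by Delta(Z), Delta(X) *)
Definition DeltaW : vect k WI -> vect k (WI * WI) :=
  linext (fun i : WI => tmulW (tpowW DZW i.1) (tpowW DXW i.2)).
(* epsilon is the algebra map with epsilon(Z) = 1, epsilon(X) = 0 *)
Definition epsW (f : vect k WI) : k := \sum_(i : WI) f i * (~~ i.2)%:R.
(* T is the anti-algebra map with T(Z) = Z^(2n-1), T(X) = - Z^n X *)
Definition TZW := powW ZW (2 * n).-1.
Definition TXW := - mulW (powW ZW n) XW.
Definition TW : vect k WI -> vect k WI :=
  linext (fun i : WI => mulW (powW TXW i.2) (powW TZW i.1)).

Definition JW := powW ZW (2 * n).
Definition w1 (v : vect k WI) : Prop := exists w, v = mulW w JW.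
Definition w2 (v : vect k WI) : Prop := exists w, v = mulW w (oneW - JW).

Definition is_ideal (P : vect k WI -> Prop) : Prop :=
  [/\ P 0, (forall u v, P u -> P v -> P (u + v)),
      (forall (c : k) v, P v -> P (c *: v)) &
      (forall u v, P v -> P (mulW u v) /\ P (mulW v u))].
End wH.

(* ---------- the Hopf algebra H_{4n} ----------
   basis: z^i x^b, 0 <= i < 2n, b in {0,1} *)
Section H.
Variables (k : fieldType) (n : nat) (q a : k).

Definition HI := ('I_(2 * n) * bool)%type.

(* the monomial z^m x^b, using z^(2n) = 1 *)
Definition monH (m : nat) (b : bool) : vect k HI :=
  [ffun p : HI => (((p.1 : nat) == (m %% (2 * n))%N) && (p.2 == b))%:R].

Definition multH (i j : HI) : vect k HI :=
  if i.2 && j.2 then 0 else (q ^- (i.2 * j.1)%N) *: monH (i.1 + j.1) (i.2 || j.2).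

Definition oneH := monH 0 false.
Definition mulH := amul multH.
Definition powH := apow multH oneH.
Definition zH := monH 1 false.
Definition xH := monH 0 true.
Definition tmulH := tmul multH.
Definition tpowH := tpow multH oneH.

Definition DzH : vect k (HI * HI) :=
  tens zH zH + (a * (1 - q ^- 2)) *: tens (mulH (powH zH n.+1) xH) (mulH zH xH).
Definition DxH : vect k (HI * HI) := tens xH oneH + tens (powH zH n) xH.
Definition DeltaH : vect k HI -> vect k (HI * HI) :=
  linext (fun i : HI => tmulH (tpowH DzH i.1) (tpowH DxH i.2)).
Definition epsH (f : vect k HI) : k := \sum_(i : HI) f i * (~~ i.2)%:R.
(* S is the anti-algebra map with S(z) = z^{-1} = z^(2n-1), S(x) = - z^n x *)
Definition SzH := powH zH (2 * n).-1.
Definition SxH := - mulH (powH zH n) xH.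
Definition SH : vect k HI -> vect k HI :=
  linext (fun i : HI => mulH (powH SxH i.2) (powH SzH i.1)).
End H.

(* Main.v *)
Require Import Defs.
From HB Require Import structures.
From mathcomp Require Import all_boot all_order all_algebra.
From mathcomp Require Import ring zify.
Import GRing.Theory.
Local Open Scope ring_scope.

Module Aux.
Set Implicit Arguments. Unset Strict Implicit. Unset Printing Implicit Defensive.

Section Gen.
Variable k : fieldType.
Section OneI.
Variable I : finType.
Definition e (i : I) : vect k I := [ffun x => (x == i)%:R].

Lemma ffunZk (c : k) (f : vect k I) x : (c *: f) x = c * f x.
Proof. by rewrite ffunE. Qed.

Lemma sum_pickV (V : lmodType k) (G : I -> V) i :
  \sum_j ((j == i)%:R : k) *: G j = G i.
Proof.
rewrite (bigD1 i) //= eqxx scale1r big1 ?addr0 // => j /negbTE ->.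
by rewrite scale0r.
Qed.

Lemma sum_pickV' (V : lmodType k) (G : I -> V) i :
  \sum_j ((i == j)%:R : k) *: G j = G i.
Proof. by rewrite -(sum_pickV G i); apply: eq_bigr => j _; rewrite eq_sym. Qed.

Lemma vect_dec (f : vect k I) : f = \sum_i f i *: e i.
Proof.
apply/ffunP => x; rewrite sum_ffunE.
have -> : \sum_i (f i *: e i) x = \sum_i ((x == i)%:R : k) *: (f i : k^o).
  by apply: eq_bigr => i _; rewrite !ffunE; apply: mulrC.
by rewrite sum_pickV'.
Qed.

Variable J : finType.
Lemma linextD (F : I -> vect k J) f g : linext F (f + g) = linext F f + linext F g.
Proof.
rewrite /linext -big_split /=; apply: eq_bigr => i _; by rewrite ffunE scalerDl.
Qed.
Lemma linextZ (F : I -> vect k J) c f : linext F (c *: f) = c *: linext F f.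
Proof.
rewrite /linext scaler_sumr; apply: eq_bigr => i _; by rewrite ffunE scalerA.
Qed.
Lemma linext0 (F : I -> vect k J) : linext F 0 = 0.
Proof. by rewrite /linext big1 // => i _; rewrite ffunE scale0r. Qed.
Lemma linextN (F : I -> vect k J) f : linext F (- f) = - linext F f.
Proof. by rewrite -scaleN1r linextZ scaleN1r. Qed.
Lemma linext_sum (F : I -> vect k J) (T : Type) (r : seq T) (G : T -> vect k I) :
  linext F (\sum_(t <- r) G t) = \sum_(t <- r) linext F (G t).
Proof. exact: (big_morph _ (linextD F) (linext0 F)). Qed.
Lemma linext_e (F : I -> vect k J) i : linext F (e i) = F i.
Proof.
rewrite /linext -(sum_pickV F i); apply: eq_bigr => j _; by rewrite ffunE.
Qed.
Lemma linext_lin (F : I -> vect k J) f : linext F f = \sum_i f i *: F i.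
Proof. by []. Qed.
End OneI.

Section Bil.
Variable I : finType.
Variable m : I -> I -> vect k I.
Implicit Types f g h : vect k I.

Lemma bilinDl f f' g : bilin m (f + f') g = bilin m f g + bilin m f' g.
Proof.
rewrite /bilin -big_split; apply: eq_bigr => i _.
rewrite -big_split; apply: eq_bigr => j _ /=; by rewrite ffunE mulrDl scalerDl.
Qed.
Lemma bilinDr f g g' : bilin m f (g + g') = bilin m f g + bilin m f g'.
Proof.
rewrite /bilin -big_split; apply: eq_bigr => i _.
rewrite -big_split; apply: eq_bigr => j _ /=; by rewrite ffunE mulrDr scalerDl.
Qed.
Lemma bilinZl c f g : bilin m (c *: f) g = c *: bilin m f g.
Proof.
rewrite /bilin scaler_sumr; apply: eq_bigr => i _.
rewrite scaler_sumr; apply: eq_bigr => j _ /=; by rewrite ffunZk scalerA mulrA.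
Qed.
Lemma bilinZr c f g : bilin m f (c *: g) = c *: bilin m f g.
Proof.
rewrite /bilin scaler_sumr; apply: eq_bigr => i _.
rewrite scaler_sumr; apply: eq_bigr => j _ /=.
by rewrite ffunZk scalerA /= mulrCA mulrA.
Qed.
Lemma bilin0l g : bilin m 0 g = 0.
Proof. by rewrite /bilin big1 // => i _; rewrite big1 // => j _; rewrite ffunE mul0r scale0r. Qed.
Lemma bilin0r f : bilin m f 0 = 0.
Proof. by rewrite /bilin big1 // => i _; rewrite big1 // => j _; rewrite ffunE mulr0 scale0r. Qed.
Lemma bilinNl f g : bilin m (- f) g = - bilin m f g.
Proof. by rewrite -scaleN1r bilinZl scaleN1r. Qed.
Lemma bilinNr f g : bilin m f (- g) = - bilin m f g.
Proof. by rewrite -scaleN1r bilinZr scaleN1r. Qed.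
Lemma bilinBl f f' g : bilin m (f - f') g = bilin m f g - bilin m f' g.
Proof. by rewrite bilinDl bilinNl. Qed.
Lemma bilinBr f g g' : bilin m f (g - g') = bilin m f g - bilin m f g'.
Proof. by rewrite bilinDr bilinNr. Qed.
Lemma bilin_suml (T : Type) (r : seq T) (F : T -> vect k I) g :
  bilin m (\sum_(t <- r) F t) g = \sum_(t <- r) bilin m (F t) g.
Proof. exact: (big_morph _ (fun f f' => bilinDl f f' g) (bilin0l g)). Qed.
Lemma bilin_sumr (T : Type) (r : seq T) (F : T -> vect k I) f :
  bilin m f (\sum_(t <- r) F t) = \sum_(t <- r) bilin m f (F t).
Proof. exact: (big_morph _ (fun g g' => bilinDr f g g') (bilin0r f)). Qed.
Lemma bilin_ee i j : bilin m (e i) (e j) = m i j.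
Proof.
rewrite /bilin -(sum_pickV (fun i' => m i' j) i); apply: eq_bigr => i' _.
rewrite -(sum_pickV (fun j' => m i' j') j) scaler_sumr; apply: eq_bigr => j' _.
by rewrite !ffunE scalerA.
Qed.

Lemma bilin_assoc :
  (forall i j l, bilin m (m i j) (e l) = bilin m (e i) (m j l)) ->
  forall f g h, bilin m (bilin m f g) h = bilin m f (bilin m g h).
Proof.
move=> H.
have s1 i j h : bilin m (bilin m (e i) (e j)) h = bilin m (e i) (bilin m (e j) h).
  rewrite bilin_ee (vect_dec h) (@bilin_sumr _ _ _ (m i j)) (@bilin_sumr _ _ _ (e j)).
  rewrite (@bilin_sumr _ _ _ (e i)); apply: eq_bigr => l _.
  by rewrite bilinZr bilinZr bilinZr bilin_ee H.
have s2 i g h : bilin m (bilin m (e i) g) h = bilin m (e i) (bilin m g h).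
  rewrite (vect_dec g) (@bilin_sumr _ _ _ (e i)) (@bilin_suml _ _ _ (h)) (@bilin_suml _ _ _ (h)).
  rewrite (@bilin_sumr _ _ _ (e i)); apply: eq_bigr => j _.
  by rewrite bilinZr bilinZl bilinZl bilinZr s1.
move=> f g h.
rewrite (vect_dec f) (@bilin_suml _ _ _ (g)) (@bilin_suml _ _ _ (h)) (@bilin_suml _ _ _ (bilin m g h)).
apply: eq_bigr => i _.
by rewrite bilinZl bilinZl bilinZl s2.
Qed.

Transparent bilin.
Lemma bilin_decl f g : bilin m f g = \sum_i f i *: bilin m (e i) g.
Proof.
rewrite {1}(vect_dec f) bilin_suml; apply: eq_bigr => i _; by rewrite bilinZl.
Qed.

Lemma bilin_central c :
  (forall i, bilin m c (e i) = bilin m (e i) c) ->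
  forall u, bilin m c u = bilin m u c.
Proof.
move=> H u; rewrite (vect_dec u) bilin_sumr bilin_suml; apply: eq_bigr => i _.
by rewrite bilinZl bilinZr H.
Qed.
End Bil.

Lemma bilin_lin (I J : finType) (m : J -> J -> vect k J) (F : I -> vect k J) f g :
  bilin m (linext F f) (linext F g) = \sum_i \sum_j (f i * g j) *: bilin m (F i) (F j).
Proof.
rewrite /linext bilin_suml; apply: eq_bigr => i _.
rewrite bilinZl bilin_sumr scaler_sumr; apply: eq_bigr => j _.
by rewrite bilinZr scalerA.
Qed.

Lemma lin_fun_sum (I J : finType) (F : I -> vect k J) f (w : J -> k) :
  \sum_x (linext F f) x * w x = \sum_i f i * (\sum_x F i x * w x).
Proof.
rewrite /linext; under eq_bigr do rewrite sum_ffunE mulr_suml.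
rewrite exchange_big; apply: eq_bigr => i _; rewrite mulr_sumr; apply: eq_bigr => x _.
by rewrite ffunZk mulrA.
Qed.

Section Tens.
Variables I J : finType.
Lemma tens_e (i : I) (j : J) : tens (e i) (e j) = e (i, j).
Proof.
apply/ffunP => -[x y]; rewrite !ffunE /= xpair_eqE.
by rewrite -natrM mulnb.
Qed.
Lemma tensDl (f f' : vect k I) (g : vect k J) : tens (f + f') g = tens f g + tens f' g.
Proof. by apply/ffunP => p; rewrite !ffunE mulrDl. Qed.
Lemma tensDr (f : vect k I) (g g' : vect k J) : tens f (g + g') = tens f g + tens f g'.
Proof. by apply/ffunP => p; rewrite !ffunE mulrDr. Qed.
Lemma tensZl c (f : vect k I) (g : vect k J) : tens (c *: f) g = c *: tens f g.
Proof. apply/ffunP => p; rewrite ffunZk !ffunE; symmetry; apply: mulrA. Qed.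
Lemma tensZr c (f : vect k I) (g : vect k J) : tens f (c *: g) = c *: tens f g.
Proof. apply/ffunP => p; rewrite ffunZk !ffunE; symmetry; apply: mulrCA. Qed.
Lemma tens0l (g : vect k J) : tens (0 : vect k I) g = 0.
Proof. by apply/ffunP => p; rewrite !ffunE mul0r. Qed.
Lemma tens0r (f : vect k I) : tens f (0 : vect k J) = 0.
Proof. by apply/ffunP => p; rewrite !ffunE mulr0. Qed.
Lemma tensNl (f : vect k I) (g : vect k J) : tens (- f) g = - tens f g.
Proof. by apply/ffunP => p; rewrite !ffunE mulNr. Qed.
End Tens.

Section TM.
Variable I : finType.
Variable m : I -> I -> vect k I.
Definition TM := fun i j : I * I => tens (m i.1 j.1) (m i.2 j.2).
Lemma tmul_tens_e (i j i' j' : I) :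
  bilin TM (tens (e i) (e j)) (tens (e i') (e j')) =
  tens (bilin m (e i) (e i')) (bilin m (e j) (e j')).
Proof. by rewrite !tens_e !bilin_ee. Qed.

Variable J : finType.
Variable phi : vect k I -> vect k J.
Lemma tmapD s t : tmap phi (s + t) = tmap phi s + tmap phi t.
Proof. rewrite /tmap -big_split; apply: eq_bigr => p _; by rewrite ffunE scalerDl. Qed.
Lemma tmapZ c t : tmap phi (c *: t) = c *: tmap phi t.
Proof. rewrite /tmap scaler_sumr; apply: eq_bigr => p _; by rewrite ffunE scalerA. Qed.
Lemma tmap0 : tmap phi 0 = 0.
Proof. rewrite /tmap big1 // => p _; by rewrite ffunE scale0r. Qed.
Lemma tmap_sum (T : Type) (r : seq T) (G : T -> vect k (I * I)) :
  tmap phi (\sum_(t <- r) G t) = \sum_(t <- r) tmap phi (G t).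
Proof. exact: (big_morph _ tmapD tmap0). Qed.
Lemma tmap_tens_e (i j : I) : tmap phi (tens (e i) (e j)) = tens (phi (e i)) (phi (e j)).
Proof.
rewrite tens_e /tmap -(sum_pickV (fun p : I * I => tens (phi (e p.1)) (phi (e p.2))) (i, j)).
by apply: eq_bigr => p _; rewrite ffunE.
Qed.
End TM.
End Gen.
Arguments e {k I} i.

Record Good (k : fieldType) (q : k) (N : nat) (red : nat -> nat) : Prop := {
  gred_lt : forall m, (red m < N)%N;
  gred_id : forall i, (i < N)%N -> red i = i;
  gred_add : forall x y, red (red x + red y) = red (x + y);
  gqred : forall m, q ^+ red m = q ^+ m;
  gq0 : q != 0 }.

Section Mon.
Variables (k : fieldType) (q a : k) (nn N : nat) (red : nat -> nat).
Variable G : Good q N red.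
Let red_lt := gred_lt G.
Let red_id := gred_id G.
Let red_add := gred_add G.
Let qred := gqred G.
Let q0 := gq0 G.

Local Notation I := ('I_N * bool)%type.
Definition mon (m : nat) (b : bool) : vect k I :=
  [ffun p : I => (((p.1 : nat) == red m) && (p.2 == b))%:R].
Definition mult (i j : I) : vect k I :=
  if i.2 && j.2 then 0 else (q ^- (i.2 * j.1)%N) *: mon (i.1 + j.1) (i.2 || j.2).

Lemma red_idem m : red (red m) = red m.
Proof. by rewrite red_id. Qed.
Definition oI m : 'I_N := Ordinal (red_lt m).
Lemma mon_e m b : mon m b = e (oI m, b).
Proof. by apply/ffunP => -[x c]; rewrite !ffunE /=. Qed.
Lemma e_mon (i : I) : e i = mon i.1 i.2.
Proof.
case: i => x c; rewrite mon_e; congr (e (_, _)); apply: val_inj.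
by rewrite /= red_id.
Qed.
Lemma mon_eq x y b : red x = red y -> mon x b = mon y b.
Proof. by rewrite /mon => ->. Qed.
Lemma mon_red m b : mon (red m) b = mon m b.
Proof. exact: (mon_eq b (red_idem m)). Qed.
Lemma qredn (b : bool) y : q ^- (b * red y) = q ^- (b * y).
Proof. by case: b; rewrite ?mul1n ?mul0n ?qred. Qed.

Lemma mulmon x y b c : bilin mult (mon x b) (mon y c) =
  if b && c then 0 else q ^- (b * y) *: mon (x + y) (b || c).
Proof.
rewrite !mon_e bilin_ee /mult /=; case: ifP => // _.
by rewrite qredn (mon_eq _ (red_add x y)).
Qed.
Lemma mulmonF x y c : bilin mult (mon x false) (mon y c) = mon (x + y) c.
Proof. by rewrite mulmon /= mul0n expr0 invr1 scale1r. Qed.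
Lemma mulmonTF x y : bilin mult (mon x true) (mon y false) = q ^- y *: mon (x + y) true.
Proof. by rewrite mulmon /= mul1n. Qed.
Lemma mulmonTT x y : bilin mult (mon x true) (mon y true) = 0.
Proof. by rewrite mulmon. Qed.

Lemma mul1v f : bilin mult (mon 0 false) f = f.
Proof.
rewrite {1}(vect_dec f) bilin_sumr [RHS]vect_dec; apply: eq_bigr => i _.
by rewrite bilinZr e_mon mulmonF add0n.
Qed.
Lemma mulv1 f : bilin mult f (mon 0 false) = f.
Proof.
rewrite {1}(vect_dec f) bilin_suml [RHS]vect_dec; apply: eq_bigr => i _.
by rewrite bilinZl e_mon mulmon andbF muln0 expr0 invr1 scale1r addn0 orbF.
Qed.

Lemma mult_assoc f g h :
  bilin mult (bilin mult f g) h = bilin mult f (bilin mult g h).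
Proof.
apply: bilin_assoc => -[x b] [y c] [z d]; rewrite /mult /= !e_mon /=.
case: b; case: c; case: d => /=;
  rewrite ?bilin0l ?bilin0r ?bilinZl ?bilinZr ?mulmon /= ?scaler0 //;
  rewrite !scalerA addnA ?mul1n ?mul0n ?expr0 ?invr1 ?mul1r ?mulr1 //.
by rewrite exprD invfM.
Qed.

Lemma pow_mon x n : iter n (bilin mult (mon x false)) (mon 0 false) = mon (x * n) false.
Proof.
elim: n => [|n IH] /=; first by rewrite muln0.
by rewrite IH mulmonF mulnS.
Qed.

Definition dd m := a * (1 - q ^- (2 * m)).
Definition DZg := tens (mon 1 false) (mon 1 false) +
   (a * (1 - q ^- 2)) *: tens (mon nn.+1 true) (mon 1 true).
Definition DXg := tens (mon 0 true) (mon 0 false) + tens (mon nn false) (mon 0 true).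

Lemma tmul_mon x y b c x' y' b' c' :
  bilin (TM mult) (tens (mon x b) (mon y c)) (tens (mon x' b') (mon y' c')) =
  tens (bilin mult (mon x b) (mon x' b')) (bilin mult (mon y c) (mon y' c')).
Proof. by rewrite !mon_e tmul_tens_e. Qed.

Lemma tpowDZ m : iter m (bilin (TM mult) DZg) (tens (mon 0 false) (mon 0 false)) =
  tens (mon m false) (mon m false) + dd m *: tens (mon (m + nn) true) (mon m true).
Proof.
elim: m => [|m IH] /=.
  by rewrite /dd muln0 expr0 invr1 subrr mulr0 scale0r addr0.
rewrite IH /DZg.
rewrite !(bilinDl, bilinDr, bilinZl, bilinZr) !tmul_mon !mulmon /=.
rewrite ?mul0n ?mul1n ?expr0 ?invr1 ?scale1r ?tensZl ?tensZr ?tens0l ?tens0r ?scaler0 ?addr0.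
have -> : (1 + (m + nn) = m.+1 + nn)%N by lia.
have -> : (nn.+1 + m = m.+1 + nn)%N by lia.
rewrite add1n !scalerA -addrA -scalerDl; congr (_ + _ *: _).
rewrite /dd mulnS exprD [(2 * m)%N]mulnC exprM.
have Q0 : q ^+ m != 0 by rewrite expf_neq0.
set Q := q ^+ m.
field.
by rewrite Q0 q0.
Qed.

Definition Dform x (b : bool) :=
  if b then tens (mon x true) (mon x false) + tens (mon (x + nn) false) (mon x true)
  else tens (mon x false) (mon x false) + dd x *: tens (mon (x + nn) true) (mon x true).

Let tDl := @bilinDl k _ (TM mult).
Let tDr := @bilinDr k _ (TM mult).
Let tZl := @bilinZl k _ (TM mult).
Let tZr := @bilinZr k _ (TM mult).
Lemma Delta_mon x (b : bool) :
  bilin (TM mult) (iter x (bilin (TM mult) DZg) (tens (mon 0 false) (mon 0 false)))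
    (iter b (bilin (TM mult) DXg) (tens (mon 0 false) (mon 0 false))) = Dform x b.
Proof.
rewrite tpowDZ /Dform; case: b => /=.
- rewrite /DXg !(tDl, tDr, tZl, tZr) !tmul_mon !mulmon /=.
  rewrite ?mul0n ?mul1n ?muln0 ?expr0 ?invr1 ?scale1r ?tensZl ?tensZr ?tens0l ?tens0r ?scaler0 ?addr0 ?addn0.
  rewrite !tmul_mon !mulmon /=.
  by rewrite ?mul0n ?mul1n ?muln0 ?expr0 ?invr1 ?scale1r ?tensZl ?tensZr ?tens0l ?tens0r ?scaler0 ?addr0 ?addn0.
- rewrite !(tDl, tDr, tZl, tZr) !tmul_mon !mulmon /=.
  by rewrite ?mul0n ?mul1n ?muln0 ?expr0 ?invr1 ?scale1r ?tensZl ?tensZr ?tens0l ?tens0r ?scaler0 ?addr0 ?addn0.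
Qed.

Definition Tform x (b : bool) :=
  if b then - (q ^- ((2 * nn).-1 * x) *: mon (nn + (2 * nn).-1 * x) true)
  else mon ((2 * nn).-1 * x) false.

Lemma T_mon x (b : bool) :
  bilin mult (iter b (bilin mult (- bilin mult (iter nn (bilin mult (mon 1 false)) (mon 0 false)) (mon 0 true))) (mon 0 false))
    (iter x (bilin mult (iter (2 * nn).-1 (bilin mult (mon 1 false)) (mon 0 false))) (mon 0 false))
  = Tform x b.
Proof.
rewrite !pow_mon !mul1n /Tform; case: b => /=.
  by rewrite mulmonF !bilinNl mulmonTF !addn0 expr0 invr1 scale1r mulmonTF.
by rewrite mulmonF add0n.
Qed.

Lemma eps_mon m b : \sum_(i : I) mon m b i * (~~ i.2)%:R = (~~ b)%:R.
Proof.
rewrite mon_e; have := @sum_pickV k I k^o (fun i : I => ((~~ i.2)%:R : k)) (oI m, b).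
move=> /= <-; apply: eq_bigr => i _; by rewrite ffunE.
Qed.
End Mon.

Section Main.
Variables (k : fieldType) (n : nat) (q a : k).
Hypotheses (n1 : (1 <= n)%N) (qn : q ^+ (2 * n) = 1).

Let n2 : (0 < 2 * n)%N. Proof. lia. Qed.
Lemma q0 : q != 0.
Proof.
apply/negP => /eqP q0; move: qn; rewrite q0 expr0n.
have -> : (2 * n == 0)%N = false by lia.
by move/eqP; rewrite eq_sym oner_eq0.
Qed.
Lemma qmod m : q ^+ (m %% (2 * n)) = q ^+ m.
Proof. by rewrite expr_mod. Qed.
Lemma qcong x y : x = y %[mod 2 * n] -> q ^+ x = q ^+ y.
Proof. by move=> h; rewrite -qmod h qmod. Qed.

Lemma redW_mod m : redW n m = m %[mod 2 * n].
Proof.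
case: m => [|m] //; rewrite /redW /=.
by rewrite -[(m %% _).+1]addn1 modnDml addn1.
Qed.
Lemma redW_eq x y : (0 < x)%N -> (0 < y)%N -> x = y %[mod 2 * n] -> redW n x = redW n y.
Proof.
case: x => // x; case: y => // y _ _ h; rewrite /redW /=; congr S.
by apply/eqP; move/eqP: h; rewrite -(addn1 x) -(addn1 y) eqn_modDr.
Qed.
Lemma redW_lt m : (redW n m < (2 * n).+1)%N.
Proof. case: m => // m; by rewrite /redW /= ltnS ltn_pmod. Qed.
Lemma redW_id i : (i < (2 * n).+1)%N -> redW n i = i.
Proof. case: i => // i; rewrite ltnS /redW /= => h; by rewrite modn_small. Qed.
Lemma redW_idem m : redW n (redW n m) = redW n m.
Proof. by rewrite redW_id // redW_lt. Qed.
Lemma redW_add x y : redW n (redW n x + redW n y) = redW n (x + y).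
Proof.
case: x => [|x]; case: y => [|y] //.
- by rewrite !add0n redW_idem.
- by rewrite !addn0 redW_idem.
apply: redW_eq.
- rewrite /redW /=; lia.
- lia.
by rewrite -modnDm (redW_mod x.+1) (redW_mod y.+1) modnDm.
Qed.
Lemma redW_pos m : (0 < m)%N -> (0 < redW n m)%N.
Proof. by case: m. Qed.
Lemma qredW m : q ^+ redW n m = q ^+ m.
Proof. by apply: qcong; rewrite redW_mod. Qed.

Definition GW : Good q (2 * n).+1 (redW n) :=
  {| gred_lt := redW_lt; gred_id := redW_id; gred_add := redW_add; gqred := qredW; gq0 := q0 |}.

Lemma GH : Good q (2 * n) (fun m => m %% (2 * n))%N.
Proof.
split; [move=> m; exact: ltn_pmod | move=> i; exact: modn_small
  | move=> x y; exact: modnDm | exact: qmod | exact: q0].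
Qed.

Local Notation MW := (@mon k (2 * n).+1 (redW n)).
Local Notation MH := (@mon k (2 * n) (fun m => m %% (2 * n))%N).

Lemma JE : JW n q = MW (2 * n) false.
Proof. by rewrite /JW /powW /apow /amul /ZW (pow_mon GW) mul1n. Qed.

Lemma mulW_e_J i : bilin (@multW k n q) (e i) (JW n q) = MW (i.1 + 2 * n) i.2.
Proof.
rewrite JE (e_mon GW) (mulmon GW) andbF orbF.
have -> : q ^- (i.2 * (2 * n)) = 1 by case: i.2; rewrite ?mul1n ?qn ?mul0n ?expr0 invr1.
by rewrite scale1r.
Qed.

Lemma J_central u : mulW q (JW n q) u = mulW q u (JW n q).
Proof.
apply: bilin_central => i.
rewrite mulW_e_J JE (e_mon GW) (mulmonF GW); by rewrite addnC.
Qed.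

Lemma JJ : mulW q (JW n q) (JW n q) = JW n q.
Proof.
rewrite JE /mulW /amul (mulmonF GW); apply: mon_eq; apply: redW_eq; try lia.
by rewrite modnDr.
Qed.

Lemma mulW1 v : mulW q v (oneW k n) = v.
Proof. exact: (mulv1 GW). Qed.
Lemma mul1W v : mulW q (oneW k n) v = v.
Proof. exact: (mul1v GW). Qed.
Lemma mulWA (u v w : vect k (WI n)) : mulW q (mulW q u v) w = mulW q u (mulW q v w).
Proof. exact: (mult_assoc GW). Qed.

Lemma K_central u : mulW q (oneW k n - JW n q) u = mulW q u (oneW k n - JW n q).
Proof.
have := J_central u; rewrite /mulW /amul => JC.
by rewrite bilinBl bilinBr (mul1v GW) (mulv1 GW) JC.
Qed.

Lemma ideal_of (c : vect k (WI n)) : (forall u, mulW q c u = mulW q u c) ->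
  is_ideal q (fun v => exists w, v = mulW q w c).
Proof.
move=> C; split.
- by exists 0; rewrite /mulW /amul bilin0l.
- by move=> u v [w ->] [w' ->]; exists (w + w'); rewrite /mulW /amul bilinDl.
- by move=> c' v [w ->]; exists (c' *: w); rewrite /mulW /amul bilinZl.
move=> u v [w ->]; split.
- by exists (mulW q u w); rewrite mulWA.
by exists (mulW q w u); rewrite mulWA C mulWA.
Qed.

Local Notation Fphi := (fun i : HI n => MW (i.1 + 2 * n) i.2).
Local Notation phi := (linext Fphi).
Local Notation Fpi := (fun i : WI n => MH i.1 i.2).
Local Notation pi := (linext Fpi).

Lemma phi_mon m b : phi (MH m b) = MW (m + 2 * n) b.
Proof.
rewrite (mon_e GH) linext_e /=; apply: mon_eq; apply: redW_eq; try lia.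
exact: modnDml.
Qed.

Lemma pi_phi f : pi (phi f) = f.
Proof.
rewrite (linext_lin Fphi f) linext_sum [RHS]vect_dec; apply: eq_bigr => i _.
rewrite linextZ; congr (_ *: _).
rewrite (mon_e GW) linext_e /= (e_mon GH); apply: mon_eq => /=.
by rewrite redW_mod modnDr.
Qed.

Lemma phi_inj : injective phi.
Proof. by move=> f g /(congr1 pi); rewrite !pi_phi. Qed.

Lemma phi_lin (c : k) f g : phi (c *: f + g) = c *: phi f + phi g.
Proof. by rewrite linextD linextZ. Qed.

Lemma phi1 : phi (oneH k n) = JW n q.
Proof. by rewrite phi_mon JE add0n. Qed.

Lemma phi_mul f g : phi (mulH q f g) = mulW q (phi f) (phi g).
Proof.
rewrite /mulH /mulW /amul bilin_lin [bilin (multH q) f g]/bilin linext_sum.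
apply: eq_bigr => i _; rewrite linext_sum; apply: eq_bigr => j _.
rewrite linextZ; congr (_ *: _).
rewrite -[multH q i j](bilin_ee (multH q) i j) (e_mon GH) (e_mon GH) (mulmon GH) (mulmon GW).
case: ifP => _; first by rewrite linext0.
rewrite linextZ phi_mon; congr (_ *: _).
  by case: i.2; rewrite ?mul0n // !mul1n; congr GRing.inv; apply: qcong; rewrite modnDr.
apply: mon_eq; apply: redW_eq; try lia.
have -> : (i.1 + 2 * n + (j.1 + 2 * n) = (i.1 + j.1 + 2 * n) + 2 * n)%N by lia.
by rewrite [RHS]modnDr.
Qed.

Lemma w1_phi v : w1 q v <-> exists h, v = phi h.
Proof.
split.
  move=> [w ->]; exists (pi w).
  rewrite /mulW /amul bilin_decl (linext_lin Fpi w) linext_sum; apply: eq_bigr => i _.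
  by rewrite mulW_e_J linextZ phi_mon.
move=> [h ->]; exists (phi h).
by rewrite -phi1 -phi_mul /mulH /amul (mulv1 GH).
Qed.

Lemma eps_phi f : epsW (phi f) = epsH f.
Proof. rewrite /epsW /epsH lin_fun_sum; apply: eq_bigr => i _; by rewrite (eps_mon GW). Qed.

Lemma redW_addl x y : redW n (redW n x + y) = redW n (x + y).
Proof. by rewrite -[in LHS]redW_add redW_idem redW_add. Qed.

Lemma cong_r j : ((2 * n).-1 * redW n (j + 2 * n) = (2 * n).-1 * j %[mod 2 * n])%N.
Proof. by rewrite -modnMmr redW_mod modnMmr mulnDr addnC modnMDl. Qed.

Lemma DZWE : DZW n q a = DZg q a n (2 * n).+1 (redW n).
Proof.
by rewrite /DZW /ZW /XW /mulW /powW /apow /amul (pow_mon GW) !(mulmonF GW) mul1n !addn0.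
Qed.
Lemma DXWE : DXW n q = DXg k n (2 * n).+1 (redW n).
Proof. by rewrite /DXW /XW /oneW /powW /apow /amul /ZW (pow_mon GW) mul1n. Qed.
Lemma DzHE : DzH n q a = DZg q a n (2 * n) (fun m => m %% (2 * n))%N.
Proof.
by rewrite /DzH /zH /xH /mulH /powH /apow /amul (pow_mon GH) !(mulmonF GH) mul1n !addn0.
Qed.
Lemma DxHE : DxH n q = DXg k n (2 * n) (fun m => m %% (2 * n))%N.
Proof. by rewrite /DxH /xH /oneH /powH /apow /amul /zH (pow_mon GH) mul1n. Qed.

Lemma DeltaW_mon m b : DeltaW q a (MW m b) = Dform q a n (2 * n).+1 (redW n) (redW n m) b.
Proof.
rewrite (mon_e GW) /DeltaW linext_e /= /tmulW /tpowW /tpow /tmul /tone DZWE DXWE.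
exact: (Delta_mon a n GW).
Qed.
Lemma DeltaH_e i : DeltaH q a (e i) = Dform q a n (2 * n) (fun m => m %% (2 * n))%N i.1 i.2.
Proof.
rewrite /DeltaH linext_e /= /tmulH /tpowH /tpow /tmul /tone DzHE DxHE.
rewrite (Delta_mon a n GH) /Dform; congr (if _ then _ else _).
Qed.

Lemma tmap_mon x y b c :
  tmap phi (tens (MH x b) (MH y c)) = tens (MW (x + 2 * n) b) (MW (y + 2 * n) c).
Proof. by rewrite !(mon_e GH) tmap_tens_e -!(mon_e GH) !phi_mon. Qed.

Lemma dd_r j : dd q a (redW n (j + 2 * n)) = dd q a j.
Proof.
rewrite /dd; congr (a * (1 - GRing.inv _)); apply: qcong.
by rewrite -modnMmr redW_mod modnMmr mulnDr [in LHS]addnC modnMDl.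
Qed.

Lemma Delta_phi f : DeltaW q a (phi f) = tmap phi (DeltaH q a f).
Proof.
have -> : DeltaW q a (phi f) = \sum_i f i *: DeltaW q a (Fphi i).
  by rewrite (linext_lin Fphi f) /DeltaW linext_sum; apply: eq_bigr => i _; rewrite linextZ.
have -> : DeltaH q a f = \sum_i f i *: DeltaH q a (e i).
  by rewrite {1}(vect_dec f) /DeltaH linext_sum; apply: eq_bigr => i _; rewrite linextZ.
rewrite tmap_sum; apply: eq_bigr => -[j b] _; rewrite tmapZ; congr (_ *: _).
rewrite /= DeltaW_mon DeltaH_e /= /Dform.
have M1 : forall c, MW (redW n (j + 2 * n)) c = MW (j + 2 * n) c by move=> c; exact: (mon_red GW).
have M2 : forall c, MW (redW n (j + 2 * n) + n) c = MW (j + n + 2 * n) c.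
  by move=> c; apply: mon_eq; rewrite redW_addl addnAC.
by case: b; rewrite ?tmapD ?tmapZ !tmap_mon !M1 !M2 ?dd_r.
Qed.

Lemma TW_mon m b : TW q (MW m b) = Tform q n (2 * n).+1 (redW n) (redW n m) b.
Proof.
rewrite (mon_e GW) /TW linext_e /= /mulW /powW /apow /amul /TXW /TZW /ZW /XW /oneW.
exact: (T_mon n GW).
Qed.
Lemma SH_e i : SH q (e i) = Tform q n (2 * n) (fun m => m %% (2 * n))%N i.1 i.2.
Proof.
rewrite /SH linext_e /= /mulH /powH /apow /amul /SxH /SzH /zH /xH /oneH.
exact: (T_mon n GH).
Qed.

Lemma T_phi f : TW q (phi f) = phi (SH q f).
Proof.
have -> : TW q (phi f) = \sum_i f i *: TW q (Fphi i).
  by rewrite (linext_lin Fphi f) /TW linext_sum; apply: eq_bigr => i _; rewrite linextZ.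
have -> : SH q f = \sum_i f i *: SH q (e i).
  by rewrite {1}(vect_dec f) /SH linext_sum; apply: eq_bigr => i _; rewrite linextZ.
rewrite linext_sum; apply: eq_bigr => -[j b] _; rewrite linextZ; congr (_ *: _).
rewrite /= TW_mon SH_e /= /Tform.
have rpos : (0 < redW n (j + 2 * n))%N by apply: redW_pos; lia.
have n21 : (0 < (2 * n).-1)%N by lia.
case: b.
  rewrite linextN linextZ phi_mon; congr (- (_ *: _)).
    congr GRing.inv; apply: qcong; exact: cong_r.
  apply: mon_eq; apply: redW_eq; first by rewrite addn_gt0 n1.
    by rewrite !addn_gt0 n1.
  by rewrite [RHS]modnDr -modnDmr cong_r modnDmr.
rewrite phi_mon; apply: mon_eq; apply: redW_eq; first by rewrite muln_gt0 n21.
  by rewrite addn_gt0 n2 orbT.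
by rewrite [RHS]modnDr cong_r.
Qed.

Local Notation EE := (MW 0 false - MW (2 * n) false).
Local Notation YY := (MW 0 true - MW (2 * n) true).
Definition psi (p : {poly k}) : vect k (WI n) := p`_0 *: EE + p`_1 *: YY.

Let wBl := @bilinBl k _ (@multW k n q).
Let wBr := @bilinBr k _ (@multW k n q).
Let wDl := @bilinDl k _ (@multW k n q).
Let wDr := @bilinDr k _ (@multW k n q).
Let wZl := @bilinZl k _ (@multW k n q).
Let wZr := @bilinZr k _ (@multW k n q).

Lemma M4 b : MW (2 * n + 2 * n) b = MW (2 * n) b.
Proof. apply: mon_eq; apply: redW_eq; try lia; by rewrite modnDr. Qed.
Lemma qn' : q ^- (2 * n) = 1.
Proof. by rewrite qn invr1. Qed.

Lemma mulEE : bilin (@multW k n q) EE EE = EE.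
Proof.
rewrite /mulW /amul wBl !wBr !(mulmonF GW) !add0n addn0 M4.
by rewrite subrr subr0.
Qed.
Lemma mulEY : bilin (@multW k n q) EE YY = YY.
Proof.
rewrite /mulW /amul wBl !wBr !(mulmonF GW) !add0n addn0 M4.
by rewrite subrr subr0.
Qed.
Lemma mulYE : bilin (@multW k n q) YY EE = YY.
Proof.
rewrite /mulW /amul wBl !wBr !(mulmonTF GW) !add0n addn0 M4 qn' expr0 invr1 !scale1r.
by rewrite subrr subr0.
Qed.
Lemma mulYY : bilin (@multW k n q) YY YY = 0.
Proof. by rewrite /mulW /amul wBl !wBr !(mulmonTT GW) !subrr. Qed.

Lemma psi_lin (c : k) p r : psi (c *: p + r) = c *: psi p + psi r.
Proof.
rewrite /psi !coefD !coefZ !scalerDl !scalerDr !scalerA.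
by rewrite addrACA.
Qed.
Lemma psiD p r : psi (p + r) = psi p + psi r.
Proof. by move: (psi_lin 1 p r); rewrite !scale1r. Qed.
Lemma psi0 : psi 0 = 0.
Proof. by rewrite /psi !coef0 !scale0r addr0. Qed.
Lemma psiZ (c : k) p : psi (c *: p) = c *: psi p.
Proof. by rewrite -[c *: p]addr0 psi_lin psi0 addr0. Qed.
Lemma psi_sum (T : Type) (r : seq T) (F : T -> {poly k}) :
  psi (\sum_(t <- r) F t) = \sum_(t <- r) psi (F t).
Proof. exact: (big_morph _ psiD psi0). Qed.

Lemma psi1 : psi 1 = oneW k n - JW n q.
Proof. by rewrite /psi !coef1 /= scale1r scale0r addr0 JE. Qed.

Lemma psi_mul p r : psi (p * r) = mulW q (psi p) (psi r).
Proof.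
rewrite /psi !coefM big_ord1 big_ord_recl big_ord1 /=.
rewrite /mulW /amul.
move: mulEE mulEY mulYE mulYY.
generalize (MW 0 false - MW (2 * n) false) (MW 0 true - MW (2 * n) true) => E Y h1 h2 h3 h4.
rewrite !(wDl, wDr, wZl, wZr) h1 h2 h3 h4 !scaler0 addr0 !scalerA /bump /= !subn0 subnn.
by rewrite scalerDl addrA [p`_1 * _]mulrC.
Qed.

Lemma w2_psi v : w2 q v <-> exists p, v = psi p.
Proof.
split.
  move=> [w ->]; exists (\sum_i w i *: 'X^(2 * i.1 + i.2)).
  rewrite /mulW /amul bilin_decl psi_sum; apply: eq_bigr => i _; rewrite psiZ; congr (_ *: _).
  rewrite JE (e_mon GW) wBr (mulmon GW) (mulmon GW) !andbF !orbF !muln0 expr0 invr1 scale1r addn0.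
  have -> : q ^- (i.2 * (2 * n)) = 1 by case: i.2; rewrite ?mul1n ?qn' ?mul0n ?expr0 ?invr1.
  rewrite scale1r /psi !coefXn.
  case: i => [[j lt] b] /=; case: j lt => [|j] lt /=.
    by case: b => /=; rewrite add0n ?scale0r ?scale1r ?addr0 ?add0r.
  have -> : (1 == 2 * j.+1 + b)%N = false by apply/eqP; lia.
  rewrite !scale0r addr0; apply/eqP; rewrite subr_eq0; apply/eqP.
  apply: mon_eq; apply: redW_eq; try lia; by rewrite [RHS]modnDr.
move=> [p ->]; exists (psi p).
by rewrite -psi1 -psi_mul mulr1.
Qed.

Lemma psi_ker p : psi p = 0 <-> ('X^2 %| p)%R.
Proof.
split; last first.
  by move/dvdpP => [r ->]; rewrite /psi !coefMXn /= !scale0r addr0.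
move=> h.
have R2 : redW n (2 * n) = (2 * n)%N by rewrite redW_id.
have Z : (0 == 2 * n)%N = false by apply/eqP; lia.
have c0 : p`_0 = 0.
  move/ffunP: h => /(_ (ord0, false)); rewrite !ffunE /= R2 Z /=.
  by rewrite subr0 subrr scaler0 addr0; change (p`_0 * 1 = 0 -> p`_0 = 0); rewrite mulr1.
have c1 : p`_1 = 0.
  move/ffunP: h => /(_ (ord0, true)); rewrite !ffunE /= R2 Z /=.
  by rewrite !subr0 scaler0 add0r; change (p`_1 * 1 = 0 -> p`_1 = 0); rewrite mulr1.
rewrite -(poly_take_drop 2 p).
have -> : take_poly 2 p = 0.
  apply/polyP => i; rewrite coef_take_poly coef0.
  by case: i => [|[|i]] //=.
by rewrite add0r dvdp_mull // dvdpp.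
Qed.

Lemma w1w2_0 (v : vect k (WI n)) : w1 q v -> w2 q v -> v = 0.
Proof.
move=> [w ->] [w' E].
have KJ : mulW q (oneW k n - JW n q) (JW n q) = 0.
  by have JJ2 := JJ; rewrite /mulW /amul in JJ2 *; rewrite wBl (mul1v GW) JJ2 subrr.
have : mulW q (mulW q w (JW n q)) (JW n q) = mulW q w (JW n q) by rewrite mulWA JJ.
by rewrite {1}E mulWA KJ /mulW /amul bilin0r => <-.
Qed.

End Main.

End Aux.
Import Aux.

Theorem proposition3p2 (k : closedFieldType) (n : nat) (q a : k) :
  [pchar k] =i pred0 -> (1 <= n)%N -> (2 * n)%N.-primitive_root q -> a != 0 ->
  [/\
   (forall v : vect k (WI n), exists v1 v2, [/\ w1 q v1, w2 q v2 & v = v1 + v2]),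
   (forall v : vect k (WI n), w1 q v -> w2 q v -> v = 0),
   @is_ideal k n q (@w1 k n q) /\ @is_ideal k n q (@w2 k n q),
   (exists phi : vect k (HI n) -> vect k (WI n),
      [/\ [/\ (forall (c : k) f g, phi (c *: f + g) = c *: phi f + phi g),
              injective phi &
              (forall v, w1 q v <-> exists h, v = phi h)],
          phi (oneH k n) = JW n q /\
          (forall f g, phi (mulH q f g) = mulW q (phi f) (phi g)) &
          [/\ (forall f, DeltaW q a (phi f) = tmap phi (DeltaH q a f)),
              (forall f, epsW (phi f) = epsH f) &
              (forall f, TW q (phi f) = phi (SH q f))]])
   & (exists psi : {poly k} -> vect k (WI n),
      [/\ (forall (c : k) p r, psi (c *: p + r) = c *: psi p + psi r),
          psi 1 = oneW k n - JW n q,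
          (forall p r, psi (p * r) = mulW q (psi p) (psi r)),
          (forall v, w2 q v <-> exists p, v = psi p) &
          (forall p, psi p = 0 <-> ('X^2 %| p)%R)])].
Proof.
move=> _ n1 qprim _.
have qn := prim_expr_order qprim.
split.
- move=> v; exists (mulW q v (JW n q)), (mulW q v (oneW k n - JW n q)).
  split; [by exists v | by exists v | ].
  rewrite /mulW /amul -bilinDr addrC subrK; symmetry; exact: (mulv1 (GW n1 qn)).
- by move=> v; apply: (w1w2_0 n1 qn).
- split; apply: (ideal_of n1 qn).
  + exact: (J_central n1 qn).
  + exact: (K_central n1 qn).
- exists (linext (fun i : HI n => @mon k (2 * n).+1 (redW n) (i.1 + 2 * n) i.2)).
  split; [split | split | split].
  + exact: phi_lin.
  + exact: (phi_inj n1 qn).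
  + exact: (w1_phi n1 qn).
  + exact: (phi1 n1 qn).
  + exact: (phi_mul n1 qn).
  + exact: (Delta_phi a n1 qn).
  + exact: (eps_phi n1 qn).
  + exact: (T_phi n1 qn).
- exists (psi n); split.
  + exact: psi_lin.
  + exact: (psi1 n1 qn).
  + exact: (psi_mul n1 qn).
  + exact: (w2_psi n1 qn).
  + exact: (psi_ker n1).
Qed.
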